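(* For any simple graph $G$ and any integer $k \geq 1$, $2\alpha'_k(G) \geq k|V(G)| - \phi_k(G)$.
   Context: $\alpha'_k(G)$ is the maximum number of edges of a $k$-edge-colorable subgraph of $G$. For $D\subseteq V(G)$, $\phi_k(D)=k|D|-|E(G[D])|$ and $\phi_k(G)=\max_{D\subseteq V(G)}\phi_k(D)$. *)

(* Defs.v *)
From HB Require Import structures.
From mathcomp Require Import all_boot all_order all_algebra.
Set Implicit Arguments. Unset Strict Implicit. Unset Printing Implicit Defensive.
Import Order.TTheory GRing.Theory Num.Theory.

Definition simple_graph (V : finType) (e : rel V) : Prop :=
  symmetric e /\ irreflexive e.

Definition edges (V : finType) (e : rel V) : {set {set V}} :=
  [set f : {set V} | [exists x, exists y, e x y && (f == [set x; y])]].

Definition k_edge_colorable (V : finType) (k : nat) (F : {set {set V}}) : bool :=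
  [exists c : {ffun {set V} -> 'I_k},
     [forall f1 in F, forall f2 in F,
        ((f1 != f2) && ~~ [disjoint f1 & f2]) ==> (c f1 != c f2)]].

Definition alpha_k (V : finType) (e : rel V) (k : nat) : nat :=
  \max_(F : {set {set V}} | (F \subset edges e) && k_edge_colorable k F) #|F|.

Definition induced_edges (V : finType) (e : rel V) (D : {set V}) : {set {set V}} :=
  [set f in edges e | f \subset D].

Definition phi_k_set (V : finType) (e : rel V) (k : nat) (D : {set V}) : int :=
  ((k * #|D|)%:Z - (#|induced_edges e D|)%:Z)%R.

(* phi_k(G) = max_D phi_k(D). The fold starts at 0, which is harmless since
   phi_k(set0) = 0, so the max is attained. *)
Definition phi_k (V : finType) (e : rel V) (k : nat) : int :=
  \big[Num.max/0%R]_(D : {set V}) phi_k_set e k D.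

(* Main.v *)
Require Import Defs.
From HB Require Import structures.
From mathcomp Require Import all_boot all_order all_algebra.
From mathcomp Require Import zify.
Import Order.TTheory GRing.Theory Num.Theory.

Module Helpers.
Set Implicit Arguments. Unset Strict Implicit. Unset Printing Implicit Defensive.
Lemma path_end_uniq (V : finType) (R : rel V) (Rsym : symmetric R)
  (deg2 : forall y p q w, R y p -> R y q -> R y w -> [|| p == q, p == w | q == w])
  (u u' : V) (du : forall p q, R u p -> R u q -> p = q)
  (du' : forall p q, R u' p -> R u' q -> p = q) :
  forall s s' y0 y1, R y0 y1 -> path R y1 s -> path R y1 s' ->
  uniq (y0 :: y1 :: s) -> uniq (y0 :: y1 :: s') ->
  last y1 s = u -> last y1 s' = u' -> u = u'.
Proof.
elim=> [|z t IH] [|z' t'] y0 y1 R01 /= P1 P2 U1 U2 L1 L2.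
- by rewrite -L1 -L2.
- move: P2 => /andP [R1z _].
  have := du y0 z'; rewrite -L1 Rsym R01 R1z => /(_ erefl erefl) E.
  by move: U2; rewrite E !inE eqxx !orbT.
- move: P1 => /andP [R1z _].
  have := du' y0 z; rewrite -L2 Rsym R01 R1z => /(_ erefl erefl) E.
  by move: U1; rewrite E !inE eqxx !orbT.
- move: P1 P2 => /andP [R1z P1] /andP [R1z' P2].
  have := deg2 y1 y0 z z'; rewrite Rsym R01 R1z R1z' => /(_ erefl erefl erefl).
  case/or3P => [/eqP E|/eqP E|/eqP E].
  + by move: U1; rewrite E !inE eqxx !orbT.
  + by move: U2; rewrite E !inE eqxx !orbT.
  + subst z'. apply: (IH t' y1 z R1z P1 P2) => //.
    * by case/andP: U1.
    * by case/andP: U2.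
Qed.

Lemma connect_end_uniq (V : finType) (R : rel V) (Rsym : symmetric R)
  (deg2 : forall y p q w, R y p -> R y q -> R y w -> [|| p == q, p == w | q == w])
  (x u u' : V) (dx : forall p q, R x p -> R x q -> p = q)
  (du : forall p q, R u p -> R u q -> p = q)
  (du' : forall p q, R u' p -> R u' q -> p = q) :
  u != x -> u' != x -> connect R x u -> connect R x u' -> u = u'.
Proof.
move=> nux nu'x /connectP [p0 P0 E] /connectP [p0' P0' E'].
move: E; case: (shortenP P0) => p P U _ E.
move: E'; case: (shortenP P0') => p' P' U' _ E'.
case: p P U E nux => [|z t]; first by move=> _ _ ->; rewrite eqxx.
move=> /= /andP [Rxz Pt] Ut Eu nux.
case: p' P' U' E' nu'x => [|z' t']; first by move=> _ _ ->; rewrite eqxx.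
move=> /= /andP [Rxz' Pt'] Ut' Eu' nu'x.
have E := dx _ _ Rxz Rxz'; subst z'.
exact: (path_end_uniq Rsym deg2 du du' Rxz Pt Pt' Ut Ut').
Qed.

Section Graph.
Variables (V : finType) (e : rel V) (k : nat).
Hypothesis esym : symmetric e.
Hypothesis eirr : irreflexive e.

Lemma edgesP f : f \in edges e -> exists x y, e x y /\ f = [set x; y].
Proof.
rewrite inE => /existsP [x /existsP [y /andP [exy /eqP ->]]].
by exists x, y.
Qed.

Lemma edge_neq x y : [set x; y] \in edges e -> x != y.
Proof.
move=> /edgesP [p [q [epq E]]].
have : #|[set x; y]| = #|[set p; q]| by rewrite E.
rewrite !cards2.
have -> : p != q by apply/eqP => Epq; subst q; rewrite eirr in epq.
by case: (x != y).
Qed.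

Lemma edge2 x y : e x y -> [set x; y] \in edges e.
Proof. by move=> exy; rewrite inE; apply/existsP; exists x; apply/existsP; exists y; rewrite exy eqxx. Qed.

Variables (F : {set {set V}}) (c : {ffun {set V} -> 'I_k}).
Hypothesis FE : F \subset edges e.
Hypothesis cproper : forall f1 f2 y, f1 \in F -> f2 \in F -> f1 != f2 ->
  y \in f1 -> y \in f2 -> c f1 != c f2.
Hypothesis Fmax : forall F' : {set {set V}}, F' \subset edges e -> k_edge_colorable k F' -> #|F'| <= #|F|.

Lemma same_color y p q : [set y; p] \in F -> [set y; q] \in F ->
  c [set y; p] = c [set y; q] -> p = q.
Proof.
move=> Fp Fq Ec.
case E: ([set y; p] == [set y; q]).
- have Hp : p \in [set y; q] by rewrite -(eqP E) !inE eqxx orbT.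
  have nyp : y != p by apply: edge_neq; apply: (subsetP FE).
  move: Hp; rewrite !inE => /orP [/eqP Epy|/eqP //].
  by rewrite Epy eqxx in nyp.
- have := cproper (y:=y) Fp Fq; rewrite E /= !inE !eqxx /= => /(_ erefl erefl erefl).
  by rewrite Ec eqxx.
Qed.

Definition r (a b : 'I_k) : rel V := fun y z =>
  ([set y; z] \in F) && ((c [set y; z] == a) || (c [set y; z] == b)).

Lemma r_sym a b : symmetric (r a b).
Proof. by move=> y z; rewrite /r setUC. Qed.

Definition present (y : V) (i : 'I_k) := [exists f in F, (y \in f) && (c f == i)].

Lemma presentP y f : f \in F -> y \in f -> present y (c f).
Proof. by move=> Ff yf; apply/existsP; exists f; rewrite Ff yf eqxx. Qed.

Lemma r_deg2 a b y p q w : r a b y p -> r a b y q -> r a b y w -> [|| p == q, p == w | q == w].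
Proof.
rewrite /r => /andP [Fp Cp] /andP [Fq Cq] /andP [Fw Cw].
have S := same_color Fp. have S' := same_color Fq.
move: Cp Cq Cw => /orP [] /eqP Cp /orP [] /eqP Cq /orP [] /eqP Cw;
  first [ by rewrite (S _ Fq) ?eqxx //; congruence
        | by rewrite (S _ Fw) ?eqxx ?orbT //; congruence
        | by rewrite (S' _ Fw) ?eqxx ?orbT //; congruence ].
Qed.

Lemma r_deg1a a b y p q : ~~ present y a -> r a b y p -> r a b y q -> p = q.
Proof.
move=> np /andP [Fp Cp] /andP [Fq Cq].
have yp : y \in [set y; p] by rewrite !inE eqxx.
have yq : y \in [set y; q] by rewrite !inE eqxx.
have Hp := presentP Fp yp. have Hq := presentP Fq yq.
move: Cp Cq => /orP [] /eqP Cp /orP [] /eqP Cq;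
  try (by move: np; rewrite -?Cp -?Cq ?Hp ?Hq).
by apply: (same_color Fp Fq); rewrite Cp Cq.
Qed.

Lemma r_deg1b a b y p q : ~~ present y b -> r a b y p -> r a b y q -> p = q.
Proof.
move=> np /andP [Fp Cp] /andP [Fq Cq].
have yp : y \in [set y; p] by rewrite !inE eqxx.
have yq : y \in [set y; q] by rewrite !inE eqxx.
have Hp := presentP Fp yp. have Hq := presentP Fq yq.
move: Cp Cq => /orP [] /eqP Cp /orP [] /eqP Cq;
  try (by move: np; rewrite -?Cp -?Cq ?Hp ?Hq).
by apply: (same_color Fp Fq); rewrite Cp Cq.
Qed.


Definition sw (a b i : 'I_k) := if i == a then b else if i == b then a else i.

Lemma swK a b : involutive (sw a b).
Proof.
move=> i; rewrite /sw.
case: (eqVneq i a) => [->|nia].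
  by case: (eqVneq b a) => [->|nba]; rewrite ?eqxx.
case: (eqVneq i b) => [->|nib]; first by rewrite eqxx.
by rewrite (negbTE nia) (negbTE nib).
Qed.

Lemma sw_a a b i : sw a b i = a -> i = b.
Proof.
rewrite /sw; case: (eqVneq i a) => [->|nia] /=; first by move=> ->.
by case: (eqVneq i b) => // _ E; rewrite E eqxx in nia.
Qed.

Lemma sw_other a b i : i != a -> i != b -> sw a b i = i.
Proof. by rewrite /sw => /negbTE -> /negbTE ->. Qed.

Lemma kempe x u a b : [set x; u] \in edges e -> [set x; u] \notin F ->
  ~~ present u a -> ~~ present x b -> connect (r a b) x u.
Proof.
move=> Exu nF nua nxb.
apply/negPn/negP => nC.
set C := [set z | connect (r a b) x z].
have xC : x \in C by rewrite inE connect0.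
have uC : u \notin C by rewrite inE.
have rC : forall y z, r a b y z -> (y \in C) = (z \in C).
  move=> y z ryz; rewrite !inE; apply/idP/idP => H.
  - by apply: connect_trans H (connect1 ryz).
  - by apply: connect_trans H (connect1 _); rewrite r_sym.
pose c' := [ffun f => if f == [set x; u] then a
   else if (f \subset C) && ((c f == a) || (c f == b)) then sw a b (c f) else c f].
pose cc y i := if y \in C then sw a b i else i.
have c'F : forall f y, f \in F -> y \in f -> c' f = cc y (c f).
  move=> f y Ff yf; rewrite /c' ffunE.
  have -> : (f == [set x; u]) = false.
    by apply/negbTE; apply: contraNneq nF => <-.
  case Cab: ((c f == a) || (c f == b)); last first.
    rewrite andbF /cc; case: (y \in C) => //.
    by move: Cab => /norP [H1 H2]; rewrite sw_other.
  rewrite andbT.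
  have [p [q [epq Ef]]] := edgesP (subsetP FE _ Ff).
  have rpq : r a b p q by rewrite /r -Ef Ff Cab.
  have := rC _ _ rpq => Epq.
  have -> : (f \subset C) = (y \in C).
    rewrite Ef subUset !sub1set -Epq andbb.
    by rewrite Ef in yf; case/set2P: yf => ->.
  by [].
have cc_inj : forall y, injective (cc y).
  by move=> y; rewrite /cc; case: (y \in C) => //; apply: (can_inj (swK a b)).
pose F' := [set x; u] |: F.
have F'E : F' \subset edges e by rewrite subUset sub1set Exu FE.
have F'col : k_edge_colorable k F'.
  apply/existsP; exists c'; apply/forallP => f1; apply/implyP => H1.
  apply/forallP => f2; apply/implyP => H2; apply/implyP => /andP [n12 nd].
  have [y /andP [y1 y2]] : exists y, (y \in f1) && (y \in f2).
    move: nd; rewrite -setI_eq0 => /set0Pn [y]; rewrite inE => H.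
    by exists y.
  have xuC : forall f, f \in F -> y \in f -> y \in [set x; u] -> c' f != a.
    move=> f Ff yf; rewrite !inE => /orP [] /eqP Ey; subst y.
    - rewrite (c'F _ _ Ff yf) /cc xC; apply/eqP => /sw_a Ecb.
      by move: nxb; rewrite -Ecb presentP.
    - rewrite (c'F _ _ Ff yf) /cc (negbTE uC); apply/eqP => Eca.
      by move: nua; rewrite -Eca presentP.
  have c'xu : c' [set x; u] = a by rewrite /c' ffunE eqxx.
  move: H1 H2; rewrite !inE => /orP [/eqP E1|F1] /orP [/eqP E2|F2].
  - by rewrite E1 E2 eqxx in n12.
  - by rewrite E1 c'xu eq_sym; apply: xuC => //; rewrite -E1.
  - by rewrite E2 c'xu; apply: xuC => //; rewrite -E2.
  - rewrite (c'F _ _ F1 y1) (c'F _ _ F2 y2) (inj_eq (cc_inj y)).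
    exact: cproper F1 F2 n12 y1 y2.
have := Fmax F'E F'col.
by rewrite /F' cardsU1 nF ltnn.
Qed.

Definition deg (y : V) := #|[set f in F | y \in f]|.

Lemma present_set y : [set i | present y i] = c @: [set f in F | y \in f].
Proof.
apply/setP => i; rewrite inE; apply/existsP/imsetP.
- by move=> [f /andP [Ff /andP [yf /eqP <-]]]; exists f => //; rewrite inE Ff yf.
- by move=> [f]; rewrite inE => /andP [Ff yf] ->; exists f; rewrite Ff yf eqxx.
Qed.

Lemma present_card y : #|[set i | present y i]| = deg y.
Proof.
rewrite present_set card_in_imset // => f1 f2; rewrite !inE => /andP [F1 y1] /andP [F2 y2] E.
case: (eqVneq f1 f2) => // n12.
by have := cproper F1 F2 n12 y1 y2; rewrite E eqxx.
Qed.

Lemma deg_le y : deg y <= k.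
Proof. by rewrite -present_card; apply: leq_trans (max_card _) _; rewrite card_ord. Qed.

Lemma miss_ex y : deg y < k -> exists i, ~~ present y i.
Proof.
move=> dk; apply/existsP; apply: contraTT dk; rewrite negb_exists => /forallP H.
rewrite -leqNgt -present_card.
have -> : [set i | present y i] = setT by apply/setP => i; rewrite !inE; have := H i; rewrite negbK.
by rewrite cardsT card_ord.
Qed.

Lemma no_nb a y u : ~~ present y a -> connect (r a a) y u -> u = y.
Proof.
move=> np /connectP [[|z t] /= P ->] //.
move: P => /andP [/andP [Fyz Cyz] _].
have : present y (c [set y; z]) by apply: presentP Fyz _; rewrite !inE eqxx.
by move: Cyz; rewrite orbb => /eqP ->; rewrite (negbTE np).
Qed.

Variable m : V -> 'I_k.
Hypothesis mP : forall y, deg y < k -> ~~ present y (m y).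

Definition U := [set y | deg y < k].

Lemma local_bound y : y \in U ->
  #|[set f in induced_edges e U :\: F | y \in f]| <= deg y.
Proof.
move=> yU.
set Nb := [set u | ([set y; u] \in induced_edges e U) && ([set y; u] \notin F)].
have NbP : forall u, u \in Nb -> [/\ [set y; u] \in edges e, [set y; u] \notin F,
     u \in U & u != y].
  move=> u; rewrite inE => /andP [H nF]; move: H.
  rewrite /induced_edges inE => /andP [E S]; split => //.
  - by move: S; rewrite subUset !sub1set => /andP [_ ->].
  - by rewrite eq_sym; apply: edge_neq.
have S1 : [set f in induced_edges e U :\: F | y \in f] \subset [set [set y; u] | u in Nb].
  apply/subsetP => f; rewrite inE => /andP [H yf]; move: H.
  rewrite inE => /andP [nF]; rewrite /induced_edges inE => /andP [Ef SU].
  have [p [q [epq Epq]]] := edgesP Ef.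
  apply/imsetP; move: yf; rewrite Epq => /set2P [] Ey.
  - exists q; last by rewrite Ey.
    by rewrite inE Ey -Epq /induced_edges inE Ef SU nF.
  - exists p; last by rewrite Ey setUC.
    by rewrite inE Ey setUC -Epq /induced_edges inE Ef SU nF.
apply: leq_trans (subset_leq_card S1) _.
apply: leq_trans (leq_imset_card _ _) _.
have yU' : deg y < k by move: yU; rewrite inE.
have Pm : forall u, u \in Nb -> present y (m u).
  move=> u /NbP [E nF uU nuy]; case: (boolP (present y (m u))) => // np.
  have uU' : deg u < k by move: uU; rewrite inE.
  have := kempe E nF (mP uU') np => /no_nb => /(_ np) Euy.
  by rewrite Euy eqxx in nuy.
have inj : {in Nb &, injective m}.
  move=> u u' Hu Hu' Em.
  have [E nF uU nuy] := NbP u Hu. have [E' nF' uU' nuy'] := NbP u' Hu'.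
  have uk : deg u < k by move: uU; rewrite inE.
  have uk' : deg u' < k by move: uU'; rewrite inE.
  have K1 := kempe E nF (mP uk) (mP yU').
  have K2 := kempe E' nF' (mP uk') (mP yU'). rewrite -Em in K2.
  apply: (connect_end_uniq (@r_sym (m u) (m y)) (@r_deg2 (m u) (m y)) _ _ _ nuy nuy' K1 K2).
  - by move=> p q; apply: r_deg1b; apply: mP.
  - by move=> p q; apply: r_deg1a; apply: mP.
  - by move=> p q; rewrite Em; apply: r_deg1a; apply: mP.
rewrite -(card_in_imset inj) -present_card.
apply: subset_leq_card; apply/subsetP => i /imsetP [u Hu ->].
by rewrite inE Pm.
Qed.

End Graph.

Lemma card_sum (T : finType) (A : {set T}) : #|A| = \sum_y (y \in A : nat).
Proof.
rewrite -sum1_card big_mkcond /=; apply: eq_bigr => y _.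
by case: (y \in A).
Qed.

Lemma dcount (V : finType) (S : {set {set V}}) (W : {set V}) :
 (forall f, f \in S -> #|f| = 2 /\ f \subset W) ->
 \sum_(y in W) #|[set f in S | y \in f]| = 2 * #|S|.
Proof.
move=> H.
transitivity (\sum_(y in W) \sum_(f in S) (y \in f : nat)).
  apply: eq_bigr => y _; rewrite card_sum [RHS]big_mkcond /=; apply: eq_bigr => f _.
  by rewrite !inE; case: (f \in S).
rewrite exchange_big /=.
transitivity (\sum_(f in S) 2); last by rewrite sum_nat_const mulnC.
apply: eq_bigr => f Hf; have [c2 sub] := H f Hf.
rewrite -c2 card_sum [LHS]big_mkcond /=; apply: eq_bigr => y _.
case yW: (y \in W) => //.
case yf: (y \in f) => //.
by move: (subsetP sub y yf); rewrite yW.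
Qed.

End Helpers.
Import Helpers.

Theorem mainTheorem8 (V : finType) (e : rel V) (k : nat) :
  simple_graph e -> (1 <= k)%N ->
  ((k * #|V|)%:Z - phi_k e k <= (2 * alpha_k e k)%:Z)%R.
Proof.
move=> [esym eirr] hk.
pose P := fun F : {set {set V}} => (F \subset edges e) && k_edge_colorable k F.
have P0 : 0 < #|P|.
  apply/card_gt0P; exists set0; rewrite /P unfold_in /= sub0set /=.
  apply/existsP; exists [ffun=> Ordinal hk]; apply/forallP => f1.
  by rewrite inE.
have [F HF EF] := @eq_bigmax_cond _ P (fun F => #|F|) P0.
have Ea : alpha_k e k = #|F| by rewrite -EF.
move: HF; rewrite /P unfold_in /= => /andP [FE /existsP [c Hc]].
have cproper : forall f1 f2 y, f1 \in F -> f2 \in F -> f1 != f2 ->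
  y \in f1 -> y \in f2 -> c f1 != c f2.
  move=> f1 f2 y F1 F2 n12 y1 y2.
  move: Hc => /forallP /(_ f1) /implyP /(_ F1) /forallP /(_ f2) /implyP /(_ F2) /implyP.
  apply; rewrite n12 /= -setI_eq0; apply/set0Pn; exists y; by rewrite inE y1 y2.
have Fmax : forall F' : {set {set V}}, F' \subset edges e -> k_edge_colorable k F' -> #|F'| <= #|F|.
  move=> F' H1 H2; rewrite -Ea /alpha_k.
  by apply: leq_bigmax_cond; rewrite H1 H2.
pose i0 := Ordinal hk.
pose m := fun y => if [pick i | ~~ present F c y i] is Some i then i else i0.
have mP : forall y, deg F y < k -> ~~ present F c y (m y).
  move=> y dy; rewrite /m; case: pickP => [i //|H].
  have [i Hi] := miss_ex cproper dy.
  by have := H i; rewrite Hi.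
have hloc := local_bound eirr FE cproper Fmax mP.
set UU := U k F in hloc.
set IE := induced_edges e UU in hloc.
have e2 : forall f, f \in edges e -> #|f| = 2.
  move=> f /edgesP [p [q [epq ->]]]; rewrite cards2.
  by case: (eqVneq p q) => // Epq; subst q; rewrite eirr in epq.
have IEP : forall f, f \in IE -> #|f| = 2 /\ f \subset UU.
  by move=> f; rewrite /IE /induced_edges inE => /andP [Ef S]; split => //; apply: e2.
have h1 : 2 * #|IE :\: F| <= \sum_(y in UU) deg F y.
  rewrite -(dcount (W:=UU)); last by move=> f; rewrite inE => /andP [_ /IEP].
  by apply: leq_sum => y yU; apply: hloc.
have h2 : 2 * #|IE :&: F| <= \sum_(y in UU) deg F y.
  rewrite -(dcount (W:=UU)); last by move=> f; rewrite inE => /andP [/IEP].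
  apply: leq_sum => y yU; apply: subset_leq_card; apply/subsetP => f.
  by rewrite !inE => /andP [/andP [_ ->] ->].
have h3 : 2 * #|F| = \sum_(y in [set: V]) deg F y.
  rewrite -(dcount (W:=[set: V])) //; move=> f Ff; split; last exact: subsetT.
  exact: e2 (subsetP FE f Ff).
have h4 : \sum_(y in [set: V]) deg F y = \sum_(y in UU) deg F y + \sum_(y in ~: UU) deg F y.
  by rewrite (big_setID UU) /= setTI setTD.
have h5 : #|~: UU| * k <= \sum_(y in ~: UU) deg F y.
  rewrite -sum_nat_const; apply: leq_sum => y; rewrite !inE.
  by rewrite /deg -leqNgt.
have h6 := cardsC UU.
have h7 := cardsID F IE.
have hnat : k * #|V| + #|IE| <= 2 * #|F| + k * #|UU|.
  rewrite -h6 mulnDr (mulnC _ k) in h5 *.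
  move: (k * #|UU|) (k * #|~: UU|) h5 => a b h5.
  lia.
have Hphi : (phi_k_set e k UU <= phi_k e k)%R.
  rewrite /phi_k; exact: (@le_bigmax_cond _ _ _ 0%R UU xpredT (phi_k_set e k)).
rewrite /phi_k_set -/IE in Hphi.
rewrite Ea.
move: (k * #|V|) (k * #|UU|) (phi_k e k) (#|IE|) (#|F|) hnat Hphi => a b p i f.
lia.
Qed.
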